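(* Let $p$ be a prime, $d,t$ positive integers, $W=\mathbb{F}_p^d$, $U=\mathbb{F}_p^t$, and $V=\mathbb{F}_p^{d+t}=W\oplus U$. Let $g$ be a complete mapping of $U$ of cycle type $x_1^{k_1}\cdots x_{p^t}^{k_{p^t}}$, and for $\ell=1,\ldots,p^t$ enumerate its cycles of length $\ell$ as $\zeta_{\ell,i}=(u_{\ell,i,0},u_{\ell,i,1},\ldots,u_{\ell,i,\ell-1})$, $i=1,\ldots,k_\ell$ (so $g(u_{\ell,i,j})=u_{\ell,i,(j+1)\bmod \ell}$). For each such $\ell,i$ and $j=0,\ldots,\ell-1$ choose $M_{\ell,i,j}\in\operatorname{CGL}_d(p)$, and choose $w_{\ell,i}\in W$; put $\gamma_{\ell,i}=\operatorname{CT}(\lambda(M_{\ell,i,0}M_{\ell,i,1}\cdots M_{\ell,i,\ell-1},w_{\ell,i}))$. For $u=u_{\ell,i,j}$ define $\alpha_u:W\to W$, $w\mapsto wM_{\ell,i,j}$; $\omega_u=0$ if $j<\ell-1$ and $\omega_u=w_{\ell,i}$ if $j=\ell-1$; and $\nu_u=u_{\ell,i,(j+1)\bmod\ell}-u_{\ell,i,j}$. Then the $W$-coset-wise $\mathbb{F}_p$-affine function \[ f:V\to V,\quad w+u\mapsto \alpha_u(w)+u+\omega_u+\nu_u\quad(w\in W,u\in U) \] is a complete mapping of $V$ with cycle type $\prod_{\ell=1}^{p^t}\prod_{i=1}^{k_\ell}\operatorname{BU}_\ell(\gamma_{\ell,i})$.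
   Context: A complete mapping of an additive group $G$ is a permutation $h$ of $G$ such that $x\mapsto h(x)+x$ is also a permutation. Vectors are row vectors; for a $(d\times d)$-matrix $M$ over $\mathbb{F}_p$ and $v\in\mathbb{F}_p^d$, $\lambda(M,v)$ is the map $x\mapsto xM+v$ on $\mathbb{F}_p^d$. $\operatorname{CGL}_d(p)$ is the set of invertible $(d\times d)$-matrices over $\mathbb{F}_p$ not having $-1$ as an eigenvalue. The cycle type $\operatorname{CT}(\sigma)$ of a permutation $\sigma$ of a finite set $\Omega$ is the monomial $x_1^{k_1}\cdots x_{|\Omega|}^{k_{|\Omega|}}\in\mathbb{Q}[x_n:n\ge1]$ with $k_j$ the number of $j$-cycles. $\operatorname{BU}_\ell$ is the $\mathbb{Q}$-algebra endomorphism of $\mathbb{Q}[x_n:n\ge1]$ with $x_n\mapsto x_{\ell n}$. *)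

(* Defs.v *)
From HB Require Import structures.
From mathcomp Require Import all_boot all_order all_algebra all_fingroup.
Set Implicit Arguments. Unset Strict Implicit. Unset Printing Implicit Defensive.
Import GRing.Theory.
Local Open Scope ring_scope.

Definition complete_mapping (G : zmodType) (h : G -> G) : Prop :=
  bijective h /\ bijective (fun x => h x + x).

Definition CGL (p d : nat) (M : 'M['F_p]_d) : bool :=
  (M \in unitmx) && ~~ eigenvalue M (-1).

Definition lam (p d : nat) (M : 'M['F_p]_d) (v : 'rV['F_p]_d) :
  'rV['F_p]_d -> 'rV['F_p]_d := fun x => x *m M + v.

(* Monomials x_1^{k_1} x_2^{k_2} ... of Q[x_n : n >= 1] are encoded by their
   exponent vectors m : nat -> nat (m n = exponent of x_n; index 0 unused,
   always 0 for the monomials below). *)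
Definition monomial := nat -> nat.

Definition cycles (T : finType) (s : T -> T) : {set {set T}} :=
  [set [set y | fconnect s x y] | x : T].

Definition CT (T : finType) (s : T -> T) : monomial :=
  fun j => #|[set C in cycles s | #|C| == j]|.

(* BU_l : x_n |-> x_{l n}, on monomials: the exponent of x_n in BU_l(m) is
   the exponent of x_{n/l} in m if l divides n, and 0 otherwise. *)
Definition BU (l : nat) (m : monomial) : monomial :=
  fun n => if (0 < n)%N && (l %| n)%N then m (n %/ l)%N else 0%N.

Definition mono_mul (m1 m2 : monomial) : monomial := fun n => (m1 n + m2 n)%N.
Definition mono_one : monomial := fun _ => 0%N.

(* Main.v *)
Require Import Defs.
From Stdlib Require Import FunctionalExtensionality.
From HB Require Import structures.
From mathcomp Require Import all_boot all_order all_algebra all_fingroup.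
Import GRing.Theory.
Notation forder := fingraph.order.

Lemma iter_mulr (T : Type) (f : T -> T) k m x :
  iter (k * m) f x = iter k (iter m f) x.
Proof.
elim: k => [|k IH] //=; by rewrite mulSn iterD IH.
Qed.

Lemma order_dvd (T : finType) (f : T -> T) (finj : injective f) x m :
  (iter m f x == x) = (forder f x %| m)%N.
Proof.
have Hk k : iter (k * forder f x) f x = x.
  rewrite iter_mulr; elim: k => //= k ->; exact: iter_order.
apply/eqP/idP => [H|/dvdnP [k ->]]; last exact: Hk.
move: H; rewrite {1}(divn_eq m (forder f x)) addnC iterD Hk.
have := ltn_pmod m (fingraph.order_gt0 f x).
set r := (m %% forder f x)%N => Hr H.
rewrite /dvdn -/r; have := findex_iter Hr; rewrite H findex0 => <-; done.
Qed.

Lemma fconnect_eq (T : finType) (f : T -> T) (finj : injective f) x y :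
  fconnect f x y -> fconnect f x =1 fconnect f y.
Proof.
move=> Hxy z; apply/idP/idP => H.
  apply: connect_trans H; by rewrite fconnect_sym.
exact: connect_trans Hxy H.
Qed.

Lemma order_iter (T : finType) (f : T -> T) (finj : injective f) x j :
  forder f (iter j f x) = forder f x.
Proof.
rewrite /order; apply: eq_card => z.
exact: (esym (@fconnect_eq _ _ finj _ _ (fconnect_iter f j x) z)).
Qed.

Lemma card_orbit (T : finType) (s : T -> T) x :
  #|[set y | fconnect s x y]| = forder s x.
Proof. by rewrite cardsE. Qed.

Lemma CT_count (T : finType) (s : T -> T) (sinj : injective s) n :
  (CT s n * n)%N = #|[set x | forder s x == n]|.
Proof.
set X := [set x | forder s x == n].
set o := fun x => [set y | fconnect s x y].
rewrite /CT; have -> : [set C in cycles s | #|C| == n] = o @: X.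
  apply/setP => C; rewrite !inE; apply/andP/imsetP.
    by case=> /imsetP [x _ ->] Hc; exists x => //; rewrite inE -card_orbit.
  case=> x; rewrite inE => Hx ->; split; first by apply/imsetP; exists x.
  by rewrite card_orbit.
rewrite -sum_nat_const; apply/esym; rewrite -sum1_card (partition_big_imset o) /=; apply/esym.
apply: eq_bigr => C /imsetP [x0 Hx0 ->].
move: (Hx0); rewrite inE => /eqP <-; rewrite -(@card_orbit _ s x0) -sum1_card; apply/esym; apply: eq_bigl => x.
rewrite /o inE; apply/andP/idP.
  case=> _ /eqP; rewrite /o => E; have : x \in [set y | fconnect s x y] by rewrite inE connect0.
  by rewrite E inE.
move=> Hx; have E := @fconnect_eq _ _ sinj _ _ Hx.
have Eo : [set y | fconnect s x y] = [set y | fconnect s x0 y].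
  by apply/setP => z; rewrite !inE E.
split; last by rewrite Eo.
move: Hx0; rewrite !inE -!card_orbit Eo; done.
Qed.

Lemma big_eval (I : Type) (r : seq I) (P : pred I) (F : I -> monomial) n :
  (\big[mono_mul/mono_one]_(i <- r | P i) F i) n = \sum_(i <- r | P i) F i n.
Proof.
elim/big_rec2: _ => //= i y1 y2 _ <-. by [].
Qed.

Lemma card_sum (T : finType) (P : pred T) :
  #|[set x | P x]| = \sum_(x : T) (P x : nat).
Proof.
rewrite -sum1_card big_mkcond; apply: eq_bigr => x _; rewrite inE; by case: (P x).
Qed.

Lemma sum_row (p m n : nat) (F : 'rV['F_p]_(m + n) -> nat) :
  \sum_(x : 'rV['F_p]_(m + n)) F x =
  \sum_(b : 'rV['F_p]_n) \sum_(a : 'rV['F_p]_m) F (row_mx a b).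
Proof.
rewrite pair_big /=.
rewrite (reindex (fun q : 'rV['F_p]_n * 'rV['F_p]_m => row_mx q.2 q.1)) //=.
exists (fun x => (rsubmx x, lsubmx x)) => [[b a] _ | x _] /=.
  by rewrite row_mxKr row_mxKl.
by rewrite hsubmxK.
Qed.

Lemma sum_ord_ind (n k : nat) (b : bool) :
  \sum_(j < n) ((b && (j == k :> nat)) : nat) = ((b && (k < n)) : nat).
Proof.
case: b => /=; last by rewrite big1.
rewrite (eq_bigr (fun j : 'I_n => if (j == k :> nat) then 1 else 0)); last first.
  by move=> j _; case: eqP.
rewrite -big_mkcond (big_ord1_eq _ (fun _ => 1)); by case: (k < n).
Qed.

Lemma sum_nat_ind (m n k : nat) :
  \sum_(m <= j < n) ((j == k) : nat) = ((m <= k < n) : nat).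
Proof.
rewrite (eq_bigr (fun j => if (j == k) then 1 else 0)); last first.
  by move=> j _; case: eqP.
rewrite -big_mkcond big_nat1_eq; by case: (m <= k < n).
Qed.

Local Open Scope ring_scope.

Theorem theorem4p5 (p d t : nat) (hp : prime p) (hd : (0 < d)%N) (ht : (0 < t)%N)
  (g : 'rV['F_p]_t -> 'rV['F_p]_t) (hg : complete_mapping g)
  (u : nat -> nat -> nat -> 'rV['F_p]_t)
  (M : nat -> nat -> nat -> 'M['F_p]_d)
  (w0 : nat -> nat -> 'rV['F_p]_d)
  (valid := fun l i j => [&& (1 <= l <= p ^ t)%N, (i < CT g l)%N & (j < l)%N])
  (Hcyc : forall l i j, valid l i j -> g (u l i j) = u l i (j.+1 %% l)%N)
  (Hinj : forall l i j l' i' j', valid l i j -> valid l' i' j' ->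
            u l i j = u l' i' j' -> [/\ l = l', i = i' & j = j'])
  (Hcover : forall x, exists l i j, valid l i j /\ u l i j = x)
  (HM : forall l i j, valid l i j -> CGL (M l i j))
  (f : 'rV['F_p]_(d + t) -> 'rV['F_p]_(d + t))
  (Hf : forall l i j, valid l i j -> forall w : 'rV['F_p]_d,
      f (row_mx w (u l i j)) =
      row_mx (w *m M l i j + (if (j < l.-1)%N then 0 else w0 l i))
             (u l i j + (u l i (j.+1 %% l)%N - u l i j))) :
  complete_mapping f /\
  CT f = \big[mono_mul/mono_one]_(1 <= l < (p ^ t).+1)
           \big[mono_mul/mono_one]_(i < CT g l)
              BU l (CT (lam (\prod_(j < l) M l i j) (w0 l i))).
Proof.
have ginj : injective g by case: hg => /bij_inj.
have Vd : forall l i j, (1 <= l <= p ^ t)%N -> (i < CT g l)%N -> (j < l)%N ->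
    valid l i j.
  by move=> l i j H1 H2 H3; apply/and3P.
have Hf2 : forall l i j, valid l i j -> forall w, f (row_mx w (u l i j)) =
    row_mx (w *m M l i j + (if (j < l.-1)%N then 0 else w0 l i)) (u l i (j.+1 %% l)%N).
  by move=> l i j v w; rewrite Hf // [u l i j + _]addrC subrK.
have Munit : forall l i j, valid l i j -> M l i j \in unitmx.
  by move=> l i j v; case/andP: (HM _ _ _ v).
have decomp : forall x : 'rV['F_p]_(d + t), exists l i j w,
    valid l i j /\ x = row_mx w (u l i j).
  move=> x; case: (Hcover (rsubmx x)) => l [i [j [v e]]].
  by exists l, i, j, (lsubmx x); split=> //; rewrite e hsubmxK.
have finj : injective f.
  move=> x y; case: (decomp x) => l [i [j [w [v ->]]]].
  case: (decomp y) => l' [i' [j' [w' [v' ->]]]].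
  rewrite !Hf2 //; case/eq_row_mx => E1 E2.
  have E : u l i j = u l' i' j' by apply: ginj; rewrite (Hcyc _ _ _ v) (Hcyc _ _ _ v').
  case: (Hinj _ _ _ _ _ _ v v' E) => ? ? ?; subst l' i' j'.
  by move: E1 => /addIr /(can_inj (mulmxK (Munit _ _ _ v'))) ->.
split.
  split; first exact: injF_bij.
  apply: injF_bij => x y.
  case: (decomp x) => l [i [j [w [v ->]]]].
  case: (decomp y) => l' [i' [j' [w' [v' ->]]]].
  rewrite !Hf2 // !add_row_mx; case/eq_row_mx => E1 E2.
  move: E2; rewrite -(Hcyc _ _ _ v) -(Hcyc _ _ _ v') => E2.
  have E : u l i j = u l' i' j'.
    by case: hg => _ /bij_inj; apply.
  case: (Hinj _ _ _ _ _ _ v v' E) => ? ? ?; subst l' i' j'.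
  move: E1; rewrite addrAC [w' *m _ + _ + _]addrAC => /addIr E1.
  congr row_mx; apply/eqP; rewrite -subr_eq0; apply/negPn/negP => nz.
  case/andP: (HM _ _ _ v) => _ /negP; apply; apply/eigenvalueP.
  exists (w - w') => //; rewrite scaleN1r mulmxBl.
  apply: (addIr (w - w')); by rewrite addNr addrACA -opprD E1 subrr.
apply: functional_extensionality => n.
rewrite big_eval; under eq_bigr => l _ do rewrite big_eval.
have [->|n0] := posnP n.
  rewrite big1; last by move=> l _; rewrite big1.
  apply/eqP; rewrite cards_eq0; apply/eqP/setP => C; rewrite !inE.
  apply/negbTE/andP => [[/imsetP [x _ ->]]] /eqP /cards0_eq /setP /(_ x).
  by rewrite !inE connect0.
apply/eqP; rewrite -(eqn_pmul2r n0); apply/eqP.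
rewrite CT_count // big_distrl /=; under eq_bigr => l _ do rewrite big_distrl /=.
have Count : forall v, (\sum_(1 <= l < (p ^ t).+1) \sum_(i < CT g l) \sum_(j < l)
    ((v == u l i j) : nat) = 1)%N.
  move=> v; case: (Hcover v) => l0 [i0 [j0 [V0 <-]]].
  move: (V0) => /and3P [Hl0 Hi0 Hj0].
  transitivity (((1 <= l0 < (p ^ t).+1)%N) : nat); last by rewrite ltnS Hl0.
  rewrite -sum_nat_ind.
  apply: eq_big_nat => l Hl.
  transitivity (((l == l0) && (i0 < CT g l)%N) : nat); last by case: eqP => //= ->; rewrite Hi0.
  rewrite -sum_ord_ind.
  apply: eq_bigr => i _.
  have -> : ((l == l0) && (i == i0 :> nat) : nat) =
      (((l == l0) && (i == i0 :> nat)) && (j0 < l))%N.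
    case: eqP => //= El.
    have -> : (j0 < l)%N by rewrite El.
    by rewrite andbT.
  rewrite -sum_ord_ind; apply: eq_bigr => j _.
  have Vl : valid l i j by apply: Vd => //; move: Hl; rewrite ltnS.
  move: (nat_of_ord i) (nat_of_ord j) Vl => i1 j1 Vl.
  apply: congr1; apply/eqP/idP.
    by case/(Hinj _ _ _ _ _ _ V0 Vl) => -> -> ->; rewrite !eqxx.
  by case/andP => /andP [/eqP -> /eqP ->] /eqP ->.
have Enum : forall Psi : 'rV['F_p]_t -> nat, (\sum_(v : 'rV['F_p]_t) Psi v =
    \sum_(1 <= l < (p ^ t).+1) \sum_(i < CT g l) \sum_(j < l) Psi (u l i j))%N.
  move=> Psi.
  have E1 : forall a, (Psi a = \sum_v Psi v * (v == a))%N.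
    move=> a; rewrite (bigD1 a) //= eqxx muln1 big1 ?addn0 // => v /negbTE ->.
    by rewrite muln0.
  under eq_bigr => l _ do under eq_bigr => i _ do under eq_bigr => j _ do rewrite E1.
  under eq_bigr => l _ do under eq_bigr => i _ do rewrite exchange_big.
  under eq_bigr => l _ do rewrite exchange_big.
  rewrite exchange_big; apply: eq_bigr => v _.
  under eq_bigr => l _ do under eq_bigr => i _ do rewrite -big_distrr.
  under eq_bigr => l _ do rewrite -big_distrr.
  by rewrite -big_distrr /= Count muln1.
rewrite card_sum sum_row.
rewrite (Enum (fun b => \sum_(a : 'rV['F_p]_d) (forder f (row_mx a b) == n : nat))%N).
apply: eq_big_nat => l Hl; apply: eq_bigr => i _.
case: l Hl i => [//|l] Hl i.
have Vl : forall j, (j < l.+1)%N -> valid l.+1 i j.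
  by move=> j Hj; apply: Vd => //; move: Hl; rewrite ltnS.
set u0 := u l.+1 i 0%N.
set L := lam (\prod_(j < l.+1) M l.+1 i j) (w0 l.+1 i).
have Ha : forall k, (k < l.+1)%N -> forall w, iter k f (row_mx w u0) =
    row_mx (w *m \prod_(j < k) M l.+1 i j) (u l.+1 i k).
  elim=> [|k IH] Hk w /=.
    by rewrite big_ord0 -idmxE mulmx1.
  have Hk' : (k < l)%N by rewrite -ltnS.
  rewrite IH ?(ltnW Hk) // Hf2 ?Vl ?(ltnW Hk) //= Hk' addr0 modn_small //.
  by rewrite big_ord_recr /= -mulmxE mulmxA.
have Hb : forall w, iter l.+1 f (row_mx w u0) = row_mx (L w) u0.
  move=> w; rewrite iterS Ha // Hf2 ?Vl //= ltnn modnn /L /lam.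
  by rewrite big_ord_recr /= -mulmxE mulmxA.
have Hc : forall k w, iter (k * l.+1) f (row_mx w u0) = row_mx (iter k L w) u0.
  move=> k w; rewrite iter_mulr; elim: k => //= k ->; exact: Hb.
have Punit : forall k, (k <= l.+1)%N -> \prod_(j < k) M l.+1 i j \in unitmx.
  elim=> [|k IH] Hk; first by rewrite big_ord0 -idmxE unitmx1.
  by rewrite big_ord_recr /= -mulmxE unitmx_mul IH ?(ltnW Hk) // Munit // Vl.
have Linj : injective L.
  move=> x y; rewrite /L /lam => /addIr; move=> E; exact: (can_inj (mulmxK (Punit l.+1 (leqnn _))) E).
have Hd : forall w, forder f (row_mx w u0) = (l.+1 * forder L w)%N.
  move=> w; have H : forall m, ((forder f (row_mx w u0) %| m) = (l.+1 * forder L w %| m))%N.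
    move=> m; rewrite -order_dvd //.
    have -> : iter m f (row_mx w u0) = iter (m %% l.+1 + m %/ l.+1 * l.+1) f (row_mx w u0).
      by rewrite [(m %% _ + _)%N]addnC -divn_eq.
    rewrite iterD Hc Ha ?ltn_pmod //.
    apply/eqP/idP.
      case/eq_row_mx => E1 E2.
      have Hr : (m %% l.+1 = 0)%N.
        by case: (Hinj _ _ _ _ _ _ (Vl _ (ltn_pmod _ _)) (Vl 0%N _) E2).
      have Hlm : (l.+1 %| m)%N by rewrite /dvdn Hr.
      move: E1; rewrite Hr big_ord0 -idmxE mulmx1 => /eqP.
      by rewrite order_dvd // mulnC -dvdn_divRL.
    move=> H.
    have Hlm : (l.+1 %| m)%N := dvdn_trans (dvdn_mulr _ (dvdnn _)) H.
    have Hr : (m %% l.+1 = 0)%N by apply/eqP.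
    rewrite Hr big_ord0 -idmxE mulmx1; congr row_mx.
    by apply/eqP; rewrite order_dvd // dvdn_divRL // mulnC.
  by apply/eqP; rewrite eqn_dvd H dvdnn -H dvdnn.
have He : forall j : 'I_l.+1,
    (\sum_(a : 'rV['F_p]_d) (forder f (row_mx a (u l.+1 i j)) == n : nat) =
     \sum_(a : 'rV['F_p]_d) (forder f (row_mx a u0) == n : nat))%N.
  move=> j.
  rewrite -(@card_sum _ (fun a => forder f (row_mx a (u l.+1 i j)) == n)).
  rewrite -(@card_sum _ (fun a => forder f (row_mx a u0) == n)).
  rewrite -(@card_preimset _ (fun a => a *m \prod_(k < j) M l.+1 i k) _
     (can_inj (mulmxK (Punit j (ltnW (ltn_ord j)))))).
  by apply: eq_card => a; rewrite !inE -Ha // order_iter.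
rewrite (eq_bigr _ (fun j _ => He j)) sum_nat_const card_ord.
rewrite /BU /= n0 /=.
case: (boolP (l.+1 %| n)%N) => [/dvdnP [k Ek] | nd].
  rewrite Ek mulnK // mulnA CT_count // mulnC; congr (_ * _)%N.
  rewrite -(@card_sum _ (fun a => forder f (row_mx a u0) == k * l.+1)%N).
  by apply: eq_card => a; rewrite !inE Hd [(k * _)%N]mulnC eqn_pmul2l.
rewrite mul0n big1 ?muln0 // => a _; rewrite Hd; case: eqP => // E.
by case/negP: nd; rewrite -E dvdn_mulr.
Qed.
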